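(* Let $G$ be a connected graph and let $A\subseteq V(G)$ be such that the distance in $G$ between any two distinct members of $A$ is at least $3$. Then $\tilde{H}_k(\operatorname{ind}(G);\mathbf{k})=0$ for all $k\le|A|-2$.
   Context: All graphs are finite and simple; $\mathbf{k}$ is a fixed field. Distance is the graph (shortest-path) distance. $\operatorname{ind}(G)$ is the simplicial complex on $V(G)$ whose faces are the independent sets of $G$, and $\tilde H_k$ is reduced simplicial homology with coefficients in $\mathbf{k}$. *)

(* Defs.v *)
From HB Require Import structures.
From mathcomp Require Import all_boot all_order all_algebra.
Set Implicit Arguments. Unset Strict Implicit. Unset Printing Implicit Defensive.
Import GRing.Theory.
Local Open Scope ring_scope.

Definition simple_graph (T : finType) (e : rel T) : Prop :=
  symmetric e /\ irreflexive e.

Definition connected_graph (T : finType) (e : rel T) : Prop :=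
  forall x y : T, connect e x y.

Definition dist_le (T : finType) (e : rel T) (a b : T) (n : nat) : Prop :=
  exists p : seq T, [/\ (size p <= n)%N, path e a p & last a p = b].

(* Independent sets of G = faces of ind(G). *)
Definition independent (T : finType) (e : rel T) (S : {set T}) : bool :=
  [forall x in S, forall y in S, ~~ e x y].

(* Simplicial chains of ind(G) with coefficients in K, represented as
   coefficient functions on finite vertex sets.  A chain of "size n"
   (i.e. of dimension n-1) is supported on faces with n vertices.
   Orientation: faces are ordered by the enumeration order of T. *)
Definition is_chain (K : fieldType) (T : finType) (e : rel T) (n : nat)
  (c : {set T} -> K) : Prop :=
  forall S : {set T}, (~~ independent e S) || (#|S| != n) -> c S = 0.

Definition ins_sign (K : fieldType) (T : finType) (v : T) (S : {set T}) : K :=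
  (-1) ^+ #|[set u in S | (enum_rank u < enum_rank v)%N]|.

(* simplicial boundary, in coefficient form:
   (d c)(S) = sum_{v notin S} sign(v,S) * c(S + v).
   Includes the augmentation (S = set0), so it computes reduced homology. *)
Definition boundary (K : fieldType) (T : finType) (c : {set T} -> K)
  : {set T} -> K :=
  fun S => \sum_(v | v \notin S) ins_sign K v S * c (v |: S).

(* Reduced homology of ind(G) in dimension n-1 vanishes
   (n : nat, so dimension ranges over -1, 0, 1, ...):
   every (n-1)-cycle is an (n-1)-boundary. *)
Definition red_hom_vanishes (K : fieldType) (T : finType) (e : rel T)
  (n : nat) : Prop :=
  forall c : {set T} -> K, is_chain e n c -> (forall S, boundary c S = 0) ->
  exists b : {set T} -> K, is_chain e n.+1 b /\ forall S, boundary b S = c S.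

(* Main.v *)
Require Import Defs.
From mathcomp Require Import all_boot all_order all_algebra.
From mathcomp Require Import ring zify.
Set Implicit Arguments. Unset Strict Implicit. Unset Printing Implicit Defensive.
Import GRing.Theory.
Local Open Scope ring_scope.

Lemma sign_sq (K : fieldType) (T : finType) (v : T) (S : {set T}) :
  ins_sign K v S * ins_sign K v S = 1.
Proof. by rewrite /ins_sign -exprD addnn -mul2n exprM sqrrN expr1n expr1n. Qed.

Lemma card_ins (T : finType) (P : pred T) (u : T) (S : {set T}) :
  u \notin S -> #|[set x in u |: S | P x]| = (P u + #|[set x in S | P x]|)%N.
Proof.
move=> uS; case Pu: (P u).
  have -> : [set x in u |: S | P x] = u |: [set x in S | P x].
    by apply/setP => x; rewrite !inE; case: (eqVneq x u) => [->|]; rewrite ?Pu.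
  by rewrite cardsU1 inE (negbTE uS).
have -> : [set x in u |: S | P x] = [set x in S | P x].
  by apply/setP => x; rewrite !inE; case: (eqVneq x u) => [->|]; rewrite ?Pu ?(negbTE uS).
by [].
Qed.

Lemma sign_swap (K : fieldType) (T : finType) (u v : T) (S : {set T}) :
  u != v -> u \notin S -> v \notin S ->
  ins_sign K u (v |: S) * ins_sign K v (u |: S) = - (ins_sign K u S * ins_sign K v S).
Proof.
move=> uv uS vS; rewrite /ins_sign.
rewrite (card_ins (fun x => (enum_rank x < enum_rank u)%N) vS).
rewrite (card_ins (fun x => (enum_rank x < enum_rank v)%N) uS).
rewrite !exprD.
have hne : enum_rank u != enum_rank v.
  by apply: contra uv => /eqP /enum_rank_inj ->.
case: (ltngtP (enum_rank u) (enum_rank v)) => h.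
- rewrite expr0 expr1; ring.
- rewrite expr0 expr1; ring.
- by move: hne; rewrite -(inj_eq val_inj) /= h eqxx.
Qed.

Definition cone (K : fieldType) (T : finType) (v : T) (f : {set T} -> K) : {set T} -> K :=
  fun S => if v \in S then ins_sign K v (S :\ v) * f (S :\ v) else 0.
Definition restr (K : fieldType) (T : finType) (v : T) (c : {set T} -> K) : {set T} -> K :=
  fun S => if v \in S then 0 else c S.
Definition link (K : fieldType) (T : finType) (v : T) (c : {set T} -> K) : {set T} -> K :=
  fun S => if v \in S then 0 else ins_sign K v S * c (v |: S).

Lemma boundary_ext (K : fieldType) (T : finType) (c1 c2 : {set T} -> K) (S : {set T}) :
  (forall R, c1 R = c2 R) -> boundary c1 S = boundary c2 S.
Proof. by move=> h; apply: eq_bigr => u _; rewrite h. Qed.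

Lemma boundaryD (K : fieldType) (T : finType) (c1 c2 : {set T} -> K) (S : {set T}) :
  boundary (fun R => c1 R + c2 R) S = boundary c1 S + boundary c2 S.
Proof. by rewrite /boundary -big_split; apply: eq_bigr => u _; rewrite mulrDr. Qed.

Lemma boundaryB (K : fieldType) (T : finType) (c1 c2 : {set T} -> K) (S : {set T}) :
  boundary (fun R => c1 R - c2 R) S = boundary c1 S - boundary c2 S.
Proof.
by rewrite /boundary -sumrN -big_split; apply: eq_bigr => u _; rewrite mulrBr.
Qed.

Lemma boundary0 (K : fieldType) (T : finType) (S : {set T}) :
  boundary (fun _ : {set T} => 0 : K) S = 0.
Proof. by apply: big1 => u _; rewrite mulr0. Qed.

Lemma decomp (K : fieldType) (T : finType) (v : T) (c : {set T} -> K) (S : {set T}) :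
  c S = restr v c S + cone v (link v c) S.
Proof.
rewrite /restr /cone /link; case: ifP => vS; last by rewrite addr0.
rewrite add0r setD11 setD1K // mulrA sign_sq mul1r.
by [].
Qed.

Lemma cone_boundary (K : fieldType) (T : finType) (v : T) (f : {set T} -> K) (S : {set T}) :
  (forall R : {set T}, v \in R -> f R = 0) ->
  boundary (cone v f) S = f S - cone v (boundary f) S.
Proof.
move=> fv; rewrite /boundary /cone; case: ifP => vS.
  rewrite (fv _ vS) sub0r.
  rewrite [X in _ = - (_ * X)](bigD1 v) /=; last by rewrite setD11.
  rewrite setD1K // (fv _ vS) mulr0 add0r.
  have -> : \sum_(i | (i \notin S :\ v) && (i != v)) ins_sign K i (S :\ v) * f (i |: S :\ v)
     = \sum_(i | i \notin S) ins_sign K i (S :\ v) * f (i |: S :\ v).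
    apply: eq_bigl => i; rewrite !inE.
    by case: (eqVneq i v) => [->|]; rewrite ?vS ?andbF ?andbT.
  rewrite mulr_sumr -sumrN; apply: eq_bigr => u uS.
  have uv : u != v by apply: contraNneq uS => ->.
  rewrite setU1r //.
  have -> : (u |: S) :\ v = u |: (S :\ v).
    apply/setP => x; rewrite !inE.
    by case: (eqVneq x v) => [->|xv] /=; first by rewrite eq_sym (negbTE uv).
  have -> : ins_sign K u S = ins_sign K u (v |: (S :\ v)) by rewrite setD1K.
  have uS' : u \notin S :\ v by rewrite !inE negb_and uS orbT.
  have vS' : v \notin S :\ v by rewrite !inE eqxx.
  rewrite mulrA sign_swap //; ring.
rewrite (bigD1 v) /=; last by rewrite vS.
rewrite setU11 setU1K ?vS // mulrA sign_sq mul1r subr0.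
rewrite big1 ?addr0 // => u /andP[uS uv].
by rewrite in_setU1 eq_sym (negbTE uv) vS mulr0.
Qed.

Lemma bdecomp (K : fieldType) (T : finType) (v : T) (c : {set T} -> K) (S : {set T}) :
  boundary c S = boundary (restr v c) S + link v c S - cone v (boundary (link v c)) S.
Proof.
rewrite (@boundary_ext _ _ c (fun R => restr v c R + cone v (link v c) R) S (decomp v c)).
rewrite boundaryD cone_boundary; last by move=> R vR; rewrite /link vR.
by rewrite addrA.
Qed.

Lemma sign_cancel (K : fieldType) (T : finType) (v : T) (S : {set T}) (x : K) :
  ins_sign K v S * x = 0 -> x = 0.
Proof. by move=> h; rewrite -[x]mul1r -(sign_sq K v S) -mulrA h mulr0. Qed.

Lemma boundary_restr_in (K : fieldType) (T : finType) (v : T) (c : {set T} -> K) (S : {set T}) :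
  v \in S -> boundary (restr v c) S = 0.
Proof. by move=> vS; apply: big1 => u _; rewrite /restr in_setU1 vS orbT mulr0. Qed.

Lemma link_cycle (K : fieldType) (T : finType) (v : T) (c : {set T} -> K) :
  (forall S, boundary c S = 0) -> forall S, boundary (link v c) S = 0.
Proof.
move=> hc R; case vR: (v \in R).
  by apply: big1 => u _; rewrite /link in_setU1 vR orbT mulr0.
have := hc (v |: R); rewrite (bdecomp v) boundary_restr_in ?setU11 // add0r.
rewrite /link /cone setU11 setU1K ?vR // sub0r => /eqP; rewrite oppr_eq0 => /eqP.
exact: sign_cancel.
Qed.

Lemma bdecomp_out (K : fieldType) (T : finType) (v : T) (c : {set T} -> K) (S : {set T}) :
  v \notin S -> boundary c S = boundary (restr v c) S + link v c S.
Proof. by move=> vS; rewrite (bdecomp v) /cone (negbTE vS) subr0. Qed.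

Definition chainW (K : fieldType) (T : finType) (e : rel T) (W : {set T}) (n : nat)
  (c : {set T} -> K) : Prop :=
  forall S : {set T}, ~~ [&& S \subset W, independent e S & #|S| == n] -> c S = 0.

Definition vanW (K : fieldType) (T : finType) (e : rel T) (W : {set T}) (n : nat) : Prop :=
  forall c : {set T} -> K, chainW e W n c -> (forall S, boundary c S = 0) ->
  exists b : {set T} -> K, chainW e W n.+1 b /\ forall S, boundary b S = c S.

Lemma indepP (T : finType) (e : rel T) (S : {set T}) :
  reflect (forall x y, x \in S -> y \in S -> ~~ e x y) (independent e S).
Proof.
apply: (iffP forall_inP) => h.
  by move=> x y xS yS; move/forall_inP: (h x xS); apply.
by move=> x xS; apply/forall_inP => y yS; apply: h.
Qed.

Lemma chainW_nz (K : fieldType) (T : finType) (e : rel T) W n (c : {set T} -> K) S :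
  chainW e W n c -> c S != 0 -> [/\ S \subset W, independent e S & #|S| = n].
Proof.
move=> hc nz; case h: [&& S \subset W, independent e S & #|S| == n].
  by case/and3P: h => ? ? /eqP.
by rewrite hc ?h ?eqxx in nz.
Qed.

Lemma chainW_of (K : fieldType) (T : finType) (e : rel T) (W : {set T}) (n : nat) (c : {set T} -> K) :
  (forall S, c S != 0 -> [/\ S \subset W, independent e S & #|S| = n]) -> chainW e W n c.
Proof.
move=> h S hS; apply/eqP; apply: contraR hS => /h [a b d].
by rewrite a b d eqxx.
Qed.

Lemma chainW_sub (K : fieldType) (T : finType) (e : rel T) (W W' : {set T}) (n : nat) (c : {set T} -> K) :
  W \subset W' -> chainW e W n c -> chainW e W' n c.
Proof.
move=> sW hc; apply: chainW_of => S /(chainW_nz hc) [a b d].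
by split=> //; apply: subset_trans sW.
Qed.

Lemma chainW0 (K : fieldType) (T : finType) (e : rel T) (W : {set T}) (n : nat) :
  chainW e W n (fun _ => 0 : K).
Proof. by []. Qed.

Lemma chainW_D (K : fieldType) (T : finType) (e : rel T) (W : {set T}) (n : nat) (c1 c2 : {set T} -> K) :
  chainW e W n c1 -> chainW e W n c2 -> chainW e W n (fun S => c1 S + c2 S).
Proof. by move=> h1 h2 S hS; rewrite h1 // h2 // addr0. Qed.

Lemma chainW_B (K : fieldType) (T : finType) (e : rel T) (W : {set T}) (n : nat) (c1 c2 : {set T} -> K) :
  chainW e W n c1 -> chainW e W n c2 -> chainW e W n (fun S => c1 S - c2 S).
Proof. by move=> h1 h2 S hS; rewrite h1 // h2 // subr0. Qed.

Lemma chainW_restr (K : fieldType) (T : finType) (e : rel T) (W : {set T}) (n : nat) (c : {set T} -> K) (v : T) :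
  chainW e W n c -> chainW e (W :\ v) n (restr v c).
Proof.
move=> hc; apply: chainW_of => S; rewrite /restr; case: ifP => vS; first by rewrite eqxx.
move=> /(chainW_nz hc) [a b d]; split=> //.
apply/subsetP => x xS; rewrite !inE (subsetP a) // andbT.
by apply: contraFneq vS => <-.
Qed.

Lemma indep_sub (T : finType) (e : rel T) (S R : {set T}) :
  S \subset R -> independent e R -> independent e S.
Proof.
move=> sSR /indepP h; apply/indepP => x y xS yS; apply: h; exact: (subsetP sSR).
Qed.

Definition nbhd (T : finType) (e : rel T) (v : T) : {set T} := v |: [set u | e v u].

Lemma chainW_link (K : fieldType) (T : finType) (e : rel T) (W : {set T}) (n : nat) (c : {set T} -> K) (v : T) :
  chainW e W n c -> chainW e (W :\: nbhd e v) n.-1 (link v c).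
Proof.
move=> hc; apply: chainW_of => S; rewrite /link; case: ifP => vS; first by rewrite eqxx.
move=> h; have : c (v |: S) != 0 by apply: contraNneq h => ->; rewrite mulr0.
move=> /(chainW_nz hc) [a b d]; split.
- apply/subsetP => x xS; rewrite !inE (subsetP a) ?in_setU1 ?xS ?orbT // andbT.
  rewrite negb_or; apply/andP; split; first by apply: contraFneq vS => <-.
  by move/indepP: b; apply; rewrite !inE ?eqxx ?xS ?orbT.
- by apply: indep_sub b; apply/subsetP => x xS; rewrite in_setU1 xS orbT.
- by move: d; rewrite cardsU1 vS /= add1n => <-.
Qed.

Lemma chainW_cone (K : fieldType) (T : finType) (e : rel T) (W W' : {set T}) (n : nat) (f : {set T} -> K) (v : T) :
  symmetric e -> irreflexive e -> W' \subset W -> v \in W ->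
  (forall x, x \in W' -> ~~ e v x) -> v \notin W' ->
  chainW e W' n f -> chainW e W n.+1 (cone v f).
Proof.
move=> sym irr sW vW nv vW' hf; apply: chainW_of => S; rewrite /cone.
case: ifP => vS; last by rewrite eqxx.
move=> h; have : f (S :\ v) != 0 by apply: contraNneq h => ->; rewrite mulr0.
move=> /(chainW_nz hf) [a b d].
have hS : S = v |: (S :\ v) by rewrite setD1K.
have inW' : forall x, x \in S -> x != v -> x \in W'.
  by move=> x xS xv; apply: (subsetP a); rewrite !inE xv xS.
split.
- apply/subsetP => x xS; case: (eqVneq x v) => [->//|xv].
  by apply: (subsetP sW); apply: inW'.
- apply/indepP => x y xS yS.
  case: (eqVneq x v) => [->|xv]; case: (eqVneq y v) => [->|yv].
  + by rewrite irr.
  + by apply: nv; apply: inW'.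
  + by rewrite sym; apply: nv; apply: inW'.
  + by move/indepP: b; apply; rewrite !inE ?xv ?yv.
- by rewrite (cardsD1 v S) vS d.
Qed.

Lemma cone_case (K : fieldType) (T : finType) (e : rel T) (W : {set T}) (a : T) (n : nat) :
  symmetric e -> irreflexive e -> a \in W -> (forall x, x \in W -> ~~ e a x) ->
  vanW K e W n.
Proof.
move=> sym irr aW na c hc hcyc.
exists (cone a (restr a c)); split.
  apply: (@chainW_cone _ _ e W (W :\ a)) => //.
  - exact: subD1set.
  - by move=> x; rewrite inE => /andP[_ ]; apply: na.
  - by rewrite setD11.
  - exact: chainW_restr.
move=> S; rewrite cone_boundary; last by move=> R aR; rewrite /restr aR.
have -> : cone a (boundary (restr a c)) S = - cone a (link a c) S.
  rewrite /cone; case: ifP => aS; last by rewrite oppr0.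
  have := @bdecomp_out K T a c (S :\ a); rewrite setD11 hcyc => /(_ isT) /eqP.
  by rewrite eq_sym addr_eq0 => /eqP ->; rewrite mulrN.
by rewrite opprK -decomp.
Qed.

Definition goodA (T : finType) (e : rel T) (A : {set T}) : Prop :=
  forall a b u, a \in A -> b \in A -> a != b -> ~~ e a b && ~~ (e a u && e u b).

Lemma goodA_sub (T : finType) (e : rel T) (A B : {set T}) :
  B \subset A -> goodA e A -> goodA e B.
Proof. by move=> sBA g a b u aB bB; apply: g; apply: (subsetP sBA). Qed.

Lemma nbhd_card (T : finType) (e : rel T) (A : {set T}) (v : T) :
  symmetric e -> goodA e A -> (#|A :&: nbhd e v| <= 1)%N.
Proof.
move=> sym g; apply/card_le1_eqP => x y; rewrite !inE => /andP[xA xN] /andP[yA yN].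
apply/eqP; apply/negPn/negP => xy.
have /andP[h1 h2] : ~~ e x y && ~~ (e x v && e v y) by apply: g => //; rewrite eq_sym.

move: xN yN.
case: (eqVneq x v) => [exv|xv] /=; case: (eqVneq y v) => [eyv|yv] /=.
- by rewrite exv eyv eqxx in xy.
- by move=> _ hvy; rewrite exv hvy in h1.
- by move=> hvx _; rewrite eyv sym hvx in h1.
- by move=> hvx hvy; rewrite sym hvx hvy in h2.
Qed.

Lemma step (K : fieldType) (T : finType) (e : rel T) (W A : {set T}) (v : T) (n : nat) :
  symmetric e -> irreflexive e -> v \in W :\: A -> A \subset W -> goodA e A ->
  (n < #|A|)%N ->
  (forall (W' A' : {set T}) (m : nat), (#|W' :\: A'| < #|W :\: A|)%N -> A' \subset W' ->
      goodA e A' -> (m < #|A'|)%N -> vanW K e W' m) ->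
  vanW K e W n.
Proof.
move=> sym irr /setDP[vW vA] sAW gA hn IH c hc hcyc.
have vN : v \in nbhd e v by rewrite /nbhd setU11.
have hf : exists f, chainW e (W :\: nbhd e v) n f /\ forall S, boundary f S = link v c S.
  case: n hn hc hcyc => [|m] hn hc hcyc.
    exists (fun _ => 0); split => // S; rewrite boundary0; symmetry.
    rewrite /link; case: ifP => // vS; rewrite hc ?mulr0 //.
    by rewrite cardsU1 vS /= add1n; apply/negP => /and3P[].
  apply: (IH (W :\: nbhd e v) (A :\: nbhd e v) m).
  - apply: proper_card; apply/properP; split.
      apply/subsetP => x; rewrite !inE => /andP[h1 /andP[h2 h3]].
      by rewrite h3 andbT; apply: contra h1 => ->; rewrite h2.
    by exists v; rewrite !inE ?eqxx ?vA ?vW /= ?andbF.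
  - exact: setSD.
  - by apply: goodA_sub gA; apply: subsetDl.
  - have := cardsID (nbhd e v) A; have := nbhd_card v sym gA.
    move=> h1 h2; lia.
  - exact: (@chainW_link K T e W m.+1 c v hc).
  - exact: link_cycle.
case: hf => f [hf hbf].
have fv : forall R : {set T}, v \in R -> f R = 0.
  move=> R vR; apply: hf; apply/negP => /and3P[sR _ _].
  by move: (subsetP sR v vR); rewrite inE vN.
have : exists g, chainW e (W :\ v) n.+1 g /\ forall S, boundary g S = restr v c S + f S.
  apply: (IH (W :\ v) A n).
- apply: proper_card; apply/properP; split.
    by apply/subsetP => x; rewrite !inE => /andP[h1 /andP[h2 h3]]; rewrite h1 h3.
  by exists v; rewrite !inE ?eqxx ?vA ?vW.
- apply/subsetP => x xA; rewrite !inE (subsetP sAW) // andbT.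
  by apply: contraNneq vA => <-.
- exact: gA.
- exact: hn.
- apply: chainW_D; first exact: chainW_restr.
  apply: chainW_sub hf; apply/subsetP => x; rewrite !inE => /andP[h1 h2].
  rewrite h2 andbT; apply: contraNneq h1 => ->; by rewrite ?inE eqxx.
- move=> S; rewrite boundaryD hbf.
  case vS: (v \in S).
    by rewrite boundary_restr_in // /link vS addr0.
  by rewrite -bdecomp_out ?vS // hcyc.
case=> g [hg hbg]; exists (fun S => g S - cone v f S); split.
  apply: chainW_B; first by apply: chainW_sub hg; apply: subD1set.
  apply: (@chainW_cone _ _ e W (W :\: nbhd e v)) => //.
  - exact: subsetDl.
  - move=> x; rewrite !inE => /andP[h1 _]; move: h1.
    by rewrite negb_or => /andP[].
  - by rewrite ?inE eqxx.
move=> S; rewrite boundaryB hbg cone_boundary //.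
have -> : cone v (boundary f) S = cone v (link v c) S by rewrite /cone hbf.
rewrite [RHS](decomp v); ring.
Qed.

Lemma cone_base (K : fieldType) (T : finType) (e : rel T) (W A : {set T}) (n : nat) :
  symmetric e -> irreflexive e -> W :\: A = set0 -> A \subset W -> goodA e A ->
  (n < #|A|)%N -> vanW K e W n.
Proof.
move=> sym irr h0 sAW gA hn.
have /card_gt0P [a aA] : (0 < #|A|)%N by apply: leq_ltn_trans hn.
apply: (@cone_case K T e W a n sym irr); first exact: (subsetP sAW).
move=> x xW; case: (eqVneq x a) => [->|xa]; first by rewrite irr.
have xA : x \in A.
  apply/negPn/negP => xnA.
  have : x \in W :\: A by rewrite inE xnA xW.
  by rewrite h0 inE.
have ax : a != x by rewrite eq_sym.
by case/andP: (gA a x x aA xA ax).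
Qed.

Lemma mainlem (K : fieldType) (T : finType) (e : rel T) :
  symmetric e -> irreflexive e ->
  forall (k : nat) (W A : {set T}), (#|W :\: A| <= k)%N -> A \subset W -> goodA e A ->
  forall n, (n < #|A|)%N -> vanW K e W n.
Proof.
move=> sym irr; elim=> [|k IHk] W A hk sAW gA n hn.
  have h0 : W :\: A = set0 by apply/eqP; rewrite -cards_eq0; lia.
  exact: (cone_base sym irr h0 sAW gA hn).
case: (set_0Vmem (W :\: A)) => [h0|[v hv]]; first exact: (cone_base sym irr h0 sAW gA hn).
apply: (step sym irr hv sAW gA hn) => W' A' m h1 h2 h3 h4.
apply: (IHk W' A') => //; lia.
Qed.

Theorem corollary6p12 (K : fieldType) (T : finType) (e : rel T)
  (Hsimple : simple_graph e) (Hconn : connected_graph e) (A : {set T})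
  (HA : forall a b, a \in A -> b \in A -> a != b -> ~ dist_le e a b 2) :
  forall n : nat, (n.+1 <= #|A|)%N -> red_hom_vanishes K e n.
Proof.
case: Hsimple => sym irr n hn.
have gA : goodA e A.
  move=> a b u aA bA ab; apply/andP; split.
    apply/negP => hab; apply: (HA a b aA bA ab).
    by exists [:: b]; rewrite /= hab.
  apply/negP => /andP[hau hub]; apply: (HA a b aA bA ab).
  by exists [:: u; b]; rewrite /= hau hub.
have hv := @mainlem K T e sym irr #|[set: T] :\: A| [set: T] A (leqnn _) (subsetT A) gA n hn.
move=> c hc hcyc.
have hc' : chainW e [set: T] n c.
  move=> S; rewrite subsetT /= negb_and => h; apply: hc; exact: h.
have [b [hb hbb]] := hv c hc' hcyc.
exists b; split => // S h; apply: hb; rewrite subsetT /= negb_and; exact: h.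
Qed.
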